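(* Let $n\ge 6$ with $n\equiv 2 \pmod 4$. Let $c_i$ be the $i$-th column of the cyclic matrix $C$, and for $q>0$ let $C^q$ be the $2\times n$ matrix with columns $c_i^q=q^{(-1)^i}c_i$, $i=1,\dots,n$. Then: (1) $C^1=C$; (2) the row spans $[C^q]$, $q>0$, are pairwise distinct points of $Gr^{>0}(2,n)$; (3) there is a neighborhood $U$ of $1$ such that $E(C^q)=E(C)$ for all $q\in U$, $q>0$. In particular, the minimizer of $E$ on $Gr^{>0}(2,n)$ is not unique.
   Context: For a real $2\times n$ matrix $X$ and $1\le i<j\le n$, $\Delta_{i,j}(X)$ is the determinant of the $2\times2$ submatrix of columns $i,j$. $Gr^{>0}(2,n)$ is the set of 2-dimensional subspaces of $\mathbb{R}^n$ having a spanning $2\times n$ matrix $X$ (rows spanning the subspace) with $\Delta_{i,j}(X)>0$ for all $i<j$; $E(X)=E([X])=\max_{i<j}\Delta_{i,j}(X)/\min_{i<j}\Delta_{i,j}(X)$. The cyclic matrix $C$ is the $2\times n$ matrix whose $m$-th column is $(\cos((m-1)\pi/n),\sin((m-1)\pi/n))^T$, $m=1,\dots,n$. *)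

(* Defs.v *)
From Stdlib Require Import Reals Lra Lia List.
Open Scope R_scope.

(* A real 2 x n matrix is represented by its columns, indexed 1..n
   (values at other indices are irrelevant). Column m = (row1 entry, row2 entry). *)
Definition mat2 := nat -> (R * R).

Definition Delta (X : mat2) (i j : nat) : R :=
  fst (X i) * snd (X j) - snd (X i) * fst (X j).

Definition pairs (n : nat) : list (nat * nat) :=
  flat_map (fun i => map (fun j => (i, j)) (seq (S i) (n - i))) (seq 1 n).

Definition maxDelta (n : nat) (X : mat2) : R :=
  fold_right (fun p acc => Rmax (Delta X (fst p) (snd p)) acc) (Delta X 1 2) (pairs n).
Definition minDelta (n : nat) (X : mat2) : R :=
  fold_right (fun p acc => Rmin (Delta X (fst p) (snd p)) acc) (Delta X 1 2) (pairs n).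

Definition E (n : nat) (X : mat2) : R := maxDelta n X / minDelta n X.

Definition rowspan (n : nat) (X : mat2) (v : nat -> R) : Prop :=
  exists a b : R, forall m, (1 <= m <= n)%nat ->
    v m = a * fst (X m) + b * snd (X m).

Definition same_space (S T : (nat -> R) -> Prop) : Prop := forall v, S v <-> T v.

Definition InGrPos (n : nat) (S : (nat -> R) -> Prop) : Prop :=
  exists X : mat2, same_space S (rowspan n X) /\
    forall i j, (1 <= i)%nat -> (i < j)%nat -> (j <= n)%nat -> Delta X i j > 0.

Definition Cyc (n : nat) : mat2 :=
  fun m => (cos (INR (m - 1) * PI / INR n), sin (INR (m - 1) * PI / INR n)).

Definition Cq (n : nat) (q : R) : mat2 :=
  fun i => let s := if Nat.even i then q else / q in
           (s * fst (Cyc n i), s * snd (Cyc n i)).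

(* Main.v *)
Require Import Defs.
From Stdlib Require Import Reals.
From Stdlib Require Import Lra Lia List FunctionalExtensionality.
Open Scope R_scope.
Definition sg (q : R) (i : nat) : R := if Nat.even i then q else / q.

Lemma Delta_Cq n q i j : (1 <= i)%nat -> (i < j)%nat ->
  Defs.Delta (Cq n q) i j = (sg q i * sg q j) * sin (INR (j - i) * (PI / INR n)).
Proof.
  intros Hi Hij.
  assert (Hang : INR (j - i) * (PI / INR n) =
     INR (j - 1) * PI / INR n - INR (i - 1) * PI / INR n).
  { rewrite !minus_INR by lia. unfold Rdiv. ring. }
  rewrite Hang, sin_minus. unfold Defs.Delta, Cq, Cyc, sg; simpl.
  destruct (Nat.even i), (Nat.even j); ring.
Qed.

Lemma fold_max_le (f : nat * nat -> R) l init M :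
  (forall p, In p l -> f p <= M) -> init <= M ->
  fold_right (fun p acc => Rmax (f p) acc) init l <= M.
Proof.
  induction l as [|a l IH]; simpl; intros H Hi; auto.
  apply Rmax_lub; auto.
Qed.

Lemma fold_max_ge (f : nat * nat -> R) l init p :
  In p l -> f p <= fold_right (fun p acc => Rmax (f p) acc) init l.
Proof.
  induction l as [|a l IH]; simpl; intros H; [contradiction|].
  destruct H as [<-|H]. apply Rmax_l.
  eapply Rle_trans; [apply IH, H|apply Rmax_r].
Qed.

Lemma fold_min_ge (f : nat * nat -> R) l init m :
  (forall p, In p l -> m <= f p) -> m <= init ->
  m <= fold_right (fun p acc => Rmin (f p) acc) init l.
Proof.
  induction l as [|a l IH]; simpl; intros H Hi; auto.
  apply Rmin_glb; auto.
Qed.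

Lemma fold_min_le (f : nat * nat -> R) l init p :
  In p l -> fold_right (fun p acc => Rmin (f p) acc) init l <= f p.
Proof.
  induction l as [|a l IH]; simpl; intros H; [contradiction|].
  destruct H as [<-|H]. apply Rmin_l.
  eapply Rle_trans; [apply Rmin_r|apply IH, H].
Qed.

Lemma in_pairs n i j : In (i, j) (pairs n) <-> (1 <= i /\ i < j /\ j <= n)%nat.
Proof.
  unfold pairs. rewrite in_flat_map. split.
  - intros [i' [Hi' Hin]]. rewrite in_map_iff in Hin.
    destruct Hin as [j' [Heq Hj']]. inversion Heq; subst.
    rewrite in_seq in Hi', Hj'. lia.
  - intros H. exists i. split. rewrite in_seq; lia.
    rewrite in_map_iff. exists j. split; auto. rewrite in_seq; lia.
Qed.

Lemma sin_mono n u a b : 0 < u -> INR n * u = PI -> (a <= b)%nat -> (2 * b <= n)%nat ->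
  sin (INR a * u) <= sin (INR b * u).
Proof.
  intros Hu HPI Hab Hb.
  assert (H2 : INR (2 * b) <= INR n) by (apply le_INR; auto).
  rewrite mult_INR in H2. replace (INR 2) with 2 in H2 by (simpl; ring).
  assert (Ha : INR a <= INR b) by (apply le_INR; auto).
  pose proof (pos_INR a). pose proof PI_RGT_0.
  apply sin_incr_1; nra.
Qed.

Lemma sin_sym n u k : INR n * u = PI -> (k <= n)%nat ->
  sin (INR (n - k) * u) = sin (INR k * u).
Proof.
  intros HPI Hk. rewrite minus_INR by auto.
  replace ((INR n - INR k) * u) with (PI - INR k * u) by (rewrite <- HPI; ring).
  apply sin_PI_x.
Qed.

Lemma sin_lower n u a k : 0 < u -> INR n * u = PI -> (a <= k)%nat -> (k <= n - a)%nat ->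
  (2 * a <= n)%nat -> sin (INR a * u) <= sin (INR k * u).
Proof.
  intros Hu HPI H1 H2 H3.
  destruct (Compare_dec.le_lt_dec (2 * k) n) as [Hk|Hk].
  - apply (sin_mono n); auto.
  - rewrite <- (sin_sym n u k) by (auto; lia). apply (sin_mono n); auto; lia.
Qed.

Lemma sin_upper n u h k : 0 < u -> INR n * u = PI -> n = (2 * h)%nat -> (k <= n)%nat ->
  k <> h -> (1 <= h)%nat -> sin (INR k * u) <= cos u.
Proof.
  intros Hu HPI Hn Hk Hkh Hh.
  assert (Hc : sin (INR (h - 1) * u) = cos u).
  { rewrite <- sin_shift. f_equal. rewrite minus_INR by auto.
    rewrite <- HPI, Hn, mult_INR. simpl INR. lra. }
  rewrite <- Hc.
  destruct (Compare_dec.le_lt_dec k (h - 1)) as [Hk'|Hk'].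
  - apply (sin_mono n); auto; lia.
  - rewrite <- (sin_sym n u k) by auto. apply (sin_mono n); auto; lia.
Qed.

Lemma parity_true i : Nat.even i = true -> exists m, i = (2 * m)%nat.
Proof. intros H. apply Nat.even_spec in H. destruct H as [m Hm]. exists m; lia. Qed.

Lemma parity_false i : Nat.even i = false -> exists m, i = (2 * m + 1)%nat.
Proof.
  intros H. destruct (Nat.Even_or_Odd i) as [He|[m Hm]].
  - apply Nat.even_spec in He. congruence.
  - exists m; lia.
Qed.
Lemma basic_facts n : (6 <= n)%nat ->
  let u := PI / INR n in
  0 < u /\ INR n * u = PI /\ 0 < sin u /\ sin u <= 1/2 /\ 0 < cos u /\ cos u < 1
  /\ 3/4 <= cos u * cos u.
Proof.
  intros Hn u.
  assert (HN : 6 <= INR n) by (replace 6 with (INR 6) by (simpl; ring); apply le_INR; auto).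
  pose proof PI_RGT_0.
  assert (Hu : 0 < u) by (unfold u; apply Rdiv_lt_0_compat; lra).
  assert (HPI : INR n * u = PI) by (unfold u; field; lra).
  assert (Hs : 0 < sin u) by (apply sin_gt_0; nra).
  assert (Hs2 : sin u <= 1/2).
  { rewrite <- sin_PI6. apply sin_incr_1; nra. }
  assert (Hc : 0 < cos u) by (apply cos_gt_0; nra).
  pose proof (sin2_cos2 u). unfold Rsqr in *.
  repeat split; auto; nra.
Qed.

Lemma Delta_bounds n t q i j : n = (4 * t + 2)%nat -> (1 <= t)%nat -> 0 < q ->
  cos (PI / INR n) <= q * q -> q * q * cos (PI / INR n) <= 1 ->
  (1 <= i)%nat -> (i < j)%nat -> (j <= n)%nat ->
  sin (PI / INR n) <= Defs.Delta (Cq n q) i j <= 1.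
Proof.
  intros Hn Ht Hq Hc1 Hc2 Hi Hij Hj.
  destruct (basic_facts n ltac:(lia)) as (Hu & HPI & Hs & Hs2 & Hc & Hc' & Hcc).
  set (u := PI / INR n) in *. set (c := cos u) in *.
  rewrite Delta_Cq by auto. fold u.
  assert (Hlow : sin (INR 1 * u) <= sin (INR (j - i) * u))
    by (apply (sin_lower n); auto; lia).
  replace (INR 1 * u) with u in Hlow by (simpl; ring).
  assert (Hup1 : sin (INR (j - i) * u) <= 1) by apply (proj2 (SIN_bound _)).
  assert (Hqi : q * / q = 1) by (field; lra).
  assert (Hiq : 0 < / q) by (apply Rinv_0_lt_compat; auto).
  unfold sg.
  destruct (Nat.even i) eqn:Ei, (Nat.even j) eqn:Ej.
  -
    apply parity_true in Ei as [a Ha]. apply parity_true in Ej as [b Hb].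
    assert (Hl2 : sin (INR 2 * u) <= sin (INR (j - i) * u))
      by (apply (sin_lower n); auto; lia).
    replace (INR 2 * u) with (2 * u) in Hl2 by (simpl; ring). rewrite sin_2a in Hl2. fold c in Hl2.
    assert (Hu2 : sin (INR (j - i) * u) <= c)
      by (apply (sin_upper n u (2 * t + 1)); auto; lia).
    assert (Hk0 : 0 <= sin (INR (j - i) * u)) by lra.
    assert (A1 : c * sin (INR (j - i) * u) <= q * q * sin (INR (j - i) * u)) by nra.
    assert (A2 : c * (2 * sin u * c) <= c * sin (INR (j - i) * u)) by nra.
    assert (A3 : q * q * sin (INR (j - i) * u) <= q * q * c) by nra.
    assert (A5 : sin u * (3/4) <= sin u * (c * c)) by (apply Rmult_le_compat_l; lra).
    assert (A4 : sin u <= c * (2 * sin u * c)) by lra.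
    split; [lra|lra].
  - apply parity_true in Ei as [a Ha]. apply parity_false in Ej as [b Hb].
    replace (q * / q) with 1 by (field; lra). lra.
  - replace (/ q * q) with 1 by (field; lra). lra.
  - apply parity_false in Ei as [a Ha]. apply parity_false in Ej as [b Hb].
    assert (Hl2 : sin (INR 2 * u) <= sin (INR (j - i) * u))
      by (apply (sin_lower n); auto; lia).
    replace (INR 2 * u) with (2 * u) in Hl2 by (simpl; ring). rewrite sin_2a in Hl2. fold c in Hl2.
    assert (Hu2 : sin (INR (j - i) * u) <= c)
      by (apply (sin_upper n u (2 * t + 1)); auto; lia).
    set (w := / q) in *.
    assert (Hw1 : c <= w * w) by nra.
    assert (Hw2 : w * w * c <= 1) by nra.
    assert (Hk0 : 0 <= sin (INR (j - i) * u)) by lra.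
    assert (A1 : c * sin (INR (j - i) * u) <= w * w * sin (INR (j - i) * u)) by nra.
    assert (A2 : c * (2 * sin u * c) <= c * sin (INR (j - i) * u)) by nra.
    assert (A3 : w * w * sin (INR (j - i) * u) <= w * w * c) by nra.
    assert (A5 : sin u * (3/4) <= sin u * (c * c)) by (apply Rmult_le_compat_l; lra).
    assert (A4 : sin u <= c * (2 * sin u * c)) by lra.
    split; lra.
Qed.

Lemma max_min_Cq n t q : n = (4 * t + 2)%nat -> (1 <= t)%nat -> 0 < q ->
  cos (PI / INR n) <= q * q -> q * q * cos (PI / INR n) <= 1 ->
  maxDelta n (Cq n q) = 1 /\ minDelta n (Cq n q) = sin (PI / INR n).
Proof.
  intros Hn Ht Hq Hc1 Hc2.
  destruct (basic_facts n ltac:(lia)) as (Hu & HPI & Hs & Hs2 & Hc & Hc' & Hcc).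
  assert (HB : forall p, In p (pairs n) ->
     sin (PI / INR n) <= Defs.Delta (Cq n q) (fst p) (snd p) <= 1).
  { intros [i j] Hin. apply in_pairs in Hin. simpl.
    apply (Delta_bounds n t); auto; lia. }
  assert (HB0 : sin (PI / INR n) <= Defs.Delta (Cq n q) 1 2 <= 1).
  { apply (HB (1, 2)%nat). apply in_pairs. lia. }
  assert (Hev : Nat.even (2 * t + 2) = true).
  { apply Nat.even_spec. exists (t + 1)%nat. lia. }
  split; apply Rle_antisym; unfold maxDelta, minDelta.
  - apply (fold_max_le (fun p => Defs.Delta (Cq n q) (fst p) (snd p))).
    intros p Hp. apply HB; auto. apply HB0.
  - eapply Rle_trans;
      [|apply (fold_max_ge (fun p => Defs.Delta (Cq n q) (fst p) (snd p)) _ _ (1, 2 * t + 2)%nat)].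
    2: apply in_pairs; lia.
    cbn [fst snd]. rewrite Delta_Cq by lia. unfold sg. rewrite Hev. cbn [Nat.even].
    replace (/ q * q) with 1 by (field; lra).
    replace (INR (2 * t + 2 - 1) * (PI / INR n)) with (PI / 2).
    rewrite sin_PI2. lra.
    rewrite <- HPI, Hn. replace (2 * t + 2 - 1)%nat with (2 * t + 1)%nat by lia.
    rewrite !plus_INR, !mult_INR. simpl INR. field.
    rewrite Hn in Hu. rewrite !plus_INR, !mult_INR in Hu. simpl INR in Hu.
    pose proof (pos_INR t). lra.
  - eapply Rle_trans;
      [apply (fold_min_le (fun p => Defs.Delta (Cq n q) (fst p) (snd p)) _ _ (1, 2)%nat)|].
    apply in_pairs; lia.
    cbn [fst snd]. rewrite Delta_Cq by lia. unfold sg. cbn [Nat.even].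
    replace (/ q * q) with 1 by (field; lra).
    replace (INR (2 - 1)) with 1 by (simpl; ring). rewrite !Rmult_1_l. lra.
  - apply (fold_min_ge (fun p => Defs.Delta (Cq n q) (fst p) (snd p))).
    intros p Hp. apply HB; auto. apply HB0.
Qed.

Lemma Cq_1 n : Cq n 1 = Cyc n.
Proof.
  apply functional_extensionality. intros i. unfold Cq.
  destruct (Cyc n i) as [a b]. cbn [fst snd].
  destruct (Nat.even i); rewrite ?Rinv_1, !Rmult_1_l; reflexivity.
Qed.

Lemma Cq_col n q m : Cq n q m =
  (sg q m * cos (INR (m - 1) * (PI / INR n)), sg q m * sin (INR (m - 1) * (PI / INR n))).
Proof.
  unfold Cq, Cyc, sg. cbn [fst snd].
  replace (INR (m - 1) * PI / INR n) with (INR (m - 1) * (PI / INR n)) by (unfold Rdiv; ring).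
  reflexivity.
Qed.

Theorem mainTheorem5 (n : nat) (Hn : (6 <= n)%nat) (Hmod : (n mod 4 = 2)%nat) :
  Cq n 1 = Cyc n /\
  (forall q : R, 0 < q -> InGrPos n (rowspan n (Cq n q))) /\
  (forall q q' : R, 0 < q -> 0 < q' -> q <> q' ->
     ~ same_space (rowspan n (Cq n q)) (rowspan n (Cq n q'))) /\
  (exists eps : R, 0 < eps /\
     forall q : R, 0 < q -> Rabs (q - 1) < eps -> E n (Cq n q) = E n (Cyc n)).
Proof.
  destruct (basic_facts n Hn) as (Hu & HPI & Hs & Hs2 & Hc & Hc' & Hcc).
  set (u := PI / INR n) in *. set (c := cos u) in *.
  assert (Hsg : forall q m, 0 < q -> 0 < sg q m).
  { intros q m Hq. unfold sg. destruct (Nat.even m); auto. apply Rinv_0_lt_compat; auto. }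
  split; [apply Cq_1|]. split; [|split].
  - intros q Hq. exists (Cq n q). split; [intros v; tauto|].
    intros i j Hi Hij Hj. rewrite Delta_Cq by auto. fold u.
    apply Rmult_lt_0_compat; [apply Rmult_lt_0_compat; auto|].
    assert (H1 : INR 1 <= INR (j - i)) by (apply le_INR; lia).
    assert (H2 : INR (j - i) < INR n) by (apply lt_INR; lia).
    simpl INR in H1. apply sin_gt_0; nra.
  - intros q q' Hq Hq' Hne Hsame.
    set (v := fun m => fst (Cq n q m)).
    assert (Hv : rowspan n (Cq n q) v) by (exists 1, 0; intros m _; unfold v; ring).
    apply Hsame in Hv. destruct Hv as [A [B HAB]].
    pose proof (HAB 1%nat ltac:(lia)) as E1.
    pose proof (HAB 2%nat ltac:(lia)) as E2.
    pose proof (HAB 3%nat ltac:(lia)) as E3.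
    unfold v in E1, E2, E3. rewrite !Cq_col in E1, E2, E3. fold u in E1, E2, E3.
    unfold sg in E1, E2, E3. cbn [fst snd Nat.even] in E1, E2, E3.
    replace (INR (1 - 1)) with 0 in E1 by (simpl; ring).
    replace (INR (2 - 1)) with 1 in E2 by (simpl; ring).
    replace (INR (3 - 1)) with 2 in E3 by (simpl; ring).
    rewrite Rmult_0_l, cos_0, sin_0 in E1. rewrite Rmult_1_l in E2.
    assert (HN : 6 <= INR n) by (replace 6 with (INR 6) by (simpl; ring); apply le_INR; auto).
    assert (Hs2u : 0 < sin (2 * u)) by (apply sin_gt_0; nra).
    set (w := / q) in *. set (w' := / q') in *.
    assert (Hw : q * w = 1) by (unfold w; field; lra).
    assert (Hw' : q' * w' = 1) by (unfold w'; field; lra).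
    assert (Hw0 : 0 < w') by (unfold w'; apply Rinv_0_lt_compat; auto).
    assert (EA : w = A * w') by lra.
    assert (EB : B * w' * sin (2 * u) = 0) by (rewrite EA in E3; lra).
    assert (HB0 : B = 0).
    { apply Rmult_integral in EB as [EB|EB]; [|lra].
      apply Rmult_integral in EB as [EB|EB]; lra. }
    subst B. fold c in E2.
    assert (Eq : q = A * q').
    { apply (Rmult_eq_reg_r c); [|lra]. lra. }
    assert (HA : A * A = 1).
    { replace 1 with (q * w) by auto. rewrite Eq, EA.
      replace (A * q' * (A * w')) with (A * A * (q' * w')) by ring. rewrite Hw'. ring. }
    assert (HApos : 0 < A).
    { assert (0 < w) by (unfold w; apply Rinv_0_lt_compat; auto). nra. }
    assert (A = 1) by nra. subst A. apply Hne. lra.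
  - pose proof (Nat.div_mod n 4 ltac:(lia)) as Hdm. rewrite Hmod in Hdm.
    set (t := (n / 4)%nat) in *.
    assert (Ht : (1 <= t)%nat) by lia.
    assert (Hnt : n = (4 * t + 2)%nat) by lia.
    exists ((1 - c) / 2). split; [lra|].
    intros q Hq Hq1. apply Rabs_def2 in Hq1 as [Hq1 Hq2].
    assert (Hc1 : c <= q * q) by nra.
    assert (Hc2 : q * q * c <= 1).
    { assert (q * q <= ((3 - c) / 2) * ((3 - c) / 2)) by nra.
      assert (((3 - c) / 2) * ((3 - c) / 2) * c <= 1).
      { assert (0 <= (1 - c) * (1 - c) * (4 - c)) by
          (apply Rmult_le_pos; [nra|lra]). nra. }
      nra. }
    rewrite <- Cq_1.
    destruct (max_min_Cq n t q Hnt Ht Hq Hc1 Hc2) as [M1 M2].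
    destruct (max_min_Cq n t 1 Hnt Ht ltac:(lra) ltac:(fold u c; lra) ltac:(fold u c; lra)) as [M3 M4].
    unfold E. rewrite M1, M2, M3, M4. reflexivity.
Qed.
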